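(* Let $\nu\ge\frac12$. Then for all $x>0$, $$I_{\nu+1}^2(x)-I_\nu(x)I_{\nu+2}(x)<\frac{2\nu}{x}I_\nu(x)I_{\nu+1}(x).$$ Consequently, if $K>\nu+1$ and $r>0$ satisfies $r=\Psi_\nu(2Kr)$ with $\Psi_\nu(x)=I_{\nu+1}(x)/I_\nu(x)$, then $$r<\sqrt{1-\frac{1}{K}}.$$
   Context: $I_\nu$ denotes the modified Bessel function of the first kind of order $\nu$. *)

(* Defs.v *)
From Stdlib Require Import Reals.
From Coquelicot Require Import Coquelicot.
Open Scope R_scope.

Definition Gamma (s : R) : R :=
  RInt_gen (fun t => Rpower t (s - 1) * exp (- t))
           (at_right 0) (Rbar_locally p_infty).

Definition BesselI (nu x : R) : R :=
  Series (fun k : nat =>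
    Rpower (x / 2) (2 * INR k + nu) / (INR (Factorial.fact k) * Gamma (INR k + nu + 1))).

Definition Psi (nu x : R) : R := BesselI (nu + 1) x / BesselI nu x.

(* Main.v *)
Require Import Defs.
From Stdlib Require Import Reals Lra Lia Classical_Prop.
From Coquelicot Require Import Coquelicot.
Open Scope R_scope.

Definition gf (s t : R) : R := Rpower t (s - 1) * exp (- t).

Lemma gf_ex_derive s t : 0 < t -> ex_derive (gf s) t.
Proof. intros Ht. unfold gf, Rpower. auto_derive. exact Ht. Qed.

Lemma gf_cont s t : 0 < t -> continuous (gf s) t.
Proof. intros Ht. apply (@ex_derive_continuous R_AbsRing R_NormedModule), gf_ex_derive, Ht. Qed.

Lemma gf_pos s t : 0 < gf s t.
Proof. unfold gf, Rpower. apply Rmult_lt_0_compat; apply exp_pos. Qed.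

Lemma ex_RInt_gf s a b : 0 < a -> a <= b -> ex_RInt (gf s) a b.
Proof.
  intros Ha Hab. apply (@ex_RInt_continuous R_CompleteNormedModule). intros z Hz.
  apply gf_cont. rewrite Rmin_left in Hz by lra. lra.
Qed.

Lemma h_der s t : 0 < t ->
  is_derive (fun x => - (Rpower x s * exp (- x))) t (gf (s+1) t - s * gf s t).
Proof.
  intros Ht. unfold gf, Rpower. auto_derive. exact Ht.
  replace (s + 1 - 1) with s by ring.
  assert (E : exp (s * ln t) = exp ((s-1) * ln t) * t).
  { replace (s * ln t) with ((s-1) * ln t + ln t) by ring.
    rewrite exp_plus, exp_ln by exact Ht. reflexivity. }
  rewrite E. field. lra.
Qed.

Lemma exp_le_exp x y : x <= y -> exp x <= exp y.
Proof. intros [H|H]. left; apply exp_increasing, H. subst; lra. Qed.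

Definition Ks (s : R) : R := exp ((s-1) * (ln (2*(s-1)) - 1)).

Lemma ln_le_sub1 y : 0 < y -> ln y <= y - 1.
Proof. intros Hy. pose proof (exp_ineq1_le (ln y)). rewrite exp_ln in H by exact Hy. lra. Qed.

Lemma gf_bound s t : 1 < s -> 0 < t -> gf s t <= Ks s * exp (- t / 2).
Proof.
  intros Hs Ht. unfold gf, Ks, Rpower. rewrite <- !exp_plus.
  apply exp_le_exp.
  assert (H := ln_le_sub1 (t / (2*(s-1))) ltac:(apply Rdiv_lt_0_compat; lra)).
  rewrite ln_div in H by lra.
  assert (H2 : (s-1) * (ln t - ln (2*(s-1))) <= (s-1) * (t / (2*(s-1)) - 1))
    by (apply Rmult_le_compat_l; lra).
  replace ((s-1) * (t / (2*(s-1)) - 1)) with (t/2 - (s-1)) in H2 by (field; lra).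
  lra.
Qed.

Lemma exp_half_cont k t : continuous (fun x => k * exp (- x / 2)) t.
Proof. apply (@ex_derive_continuous R_AbsRing R_NormedModule). auto_derive. auto. Qed.

Lemma int_exp_half k a b : a <= b ->
  RInt (fun x => k * exp (- x / 2)) a b = 2 * k * exp (- a / 2) - 2 * k * exp (- b / 2).
Proof.
  intros Hab.
  assert (H : is_RInt (fun x => k * exp (- x / 2)) a b
     (minus ((fun x => -2 * k * exp (- x / 2)) b) ((fun x => -2 * k * exp (- x / 2)) a))).
  { apply (is_RInt_derive (fun x => -2 * k * exp (- x / 2))).
    - intros x _. auto_derive. auto. set (e := exp _). field.
    - intros x _. apply exp_half_cont. }
  rewrite (is_RInt_unique _ _ _ _ H). unfold minus, plus, opp; simpl; ring.
Qed.

Lemma int_bound s a b : 1 < s -> 0 < a -> a <= b -> RInt (gf s) a b <= 2 * Ks s.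
Proof.
  intros Hs Ha Hab.
  apply Rle_trans with (RInt (fun x => Ks s * exp (- x / 2)) a b).
  - apply RInt_le; auto.
    + apply ex_RInt_gf; auto.
    + apply (@ex_RInt_continuous R_CompleteNormedModule). intros; apply exp_half_cont.
    + intros x Hx. apply gf_bound; lra.
  - rewrite int_exp_half by auto.
    assert (0 < Ks s) by (unfold Ks; apply exp_pos).
    assert (exp (- a / 2) <= 1).
    { rewrite <- exp_0. apply exp_le_exp. lra. }
    pose proof (exp_pos (- b / 2)). nra.
Qed.

Lemma RInt_gf_ge0 s a b : 0 < a -> a <= b -> 0 <= RInt (gf s) a b.
Proof.
  intros Ha Hab. apply RInt_ge_0; auto. apply ex_RInt_gf; auto.
  intros; apply Rlt_le, gf_pos.
Qed.

Definition Glim (s l : R) : Prop :=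
  forall eps, 0 < eps -> exists a0 b0, 0 < a0 /\ a0 < b0 /\
    forall a b, 0 < a <= a0 -> b0 <= b -> Rabs (RInt (gf s) a b - l) < eps.

Lemma RInt_gf_split s a a1 b1 b : 0 < a -> a <= a1 -> a1 <= b1 -> b1 <= b ->
  RInt (gf s) a b = RInt (gf s) a a1 + RInt (gf s) a1 b1 + RInt (gf s) b1 b.
Proof.
  intros.
  rewrite <- (@RInt_Chasles R_CompleteNormedModule (gf s) a b1 b)
    by (apply ex_RInt_gf; lra).
  rewrite <- (@RInt_Chasles R_CompleteNormedModule (gf s) a a1 b1)
    by (apply ex_RInt_gf; lra).
  reflexivity.
Qed.

Lemma Glim_exists s : 1 < s -> exists l, 0 < l /\ Glim s l.
Proof.
  intros Hs.
  set (E := fun v => exists a b, 0 < a /\ a <= b /\ v = RInt (gf s) a b).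
  assert (HB : bound E).
  { exists (2 * Ks s). intros v [a [b [Ha [Hab ->]]]]. apply int_bound; auto. }
  assert (HE : exists v, E v).
  { exists (RInt (gf s) 1 2). exists 1, 2. repeat split; lra. }
  destruct (completeness E HB HE) as [l [Hub Hlub]].
  assert (H12 : 0 < RInt (gf s) 1 2).
  { apply RInt_gt_0; [lra| |]. intros; apply gf_pos. intros; apply gf_cont; lra. }
  exists l. split.
  { apply Rlt_le_trans with (RInt (gf s) 1 2); auto. apply Hub. exists 1, 2. repeat split; lra. }
  intros eps Heps.
  destruct (Classical_Prop.classic (exists v, E v /\ l - eps < v)) as [[v [[a1 [b1 [Ha1 [Hab1 ->]]]] Hv]] | Hno].
  2: { exfalso. assert (l <= l - eps); [|lra]. apply Hlub. intros v Ev.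
       destruct (Rle_or_lt v (l - eps)) as [H|H]; auto. exfalso; apply Hno; exists v; auto. }
  exists a1, (b1 + 1). repeat split; try lra.
  intros a b Ha Hb.
  assert (Hin : RInt (gf s) a b <= l).
  { apply Hub. exists a, b. repeat split; lra. }
  rewrite (RInt_gf_split s a a1 b1 b) by lra.
  rewrite (RInt_gf_split s a a1 b1 b) in Hin by lra.
  pose proof (RInt_gf_ge0 s a a1 ltac:(lra) ltac:(lra)).
  pose proof (RInt_gf_ge0 s b1 b ltac:(lra) ltac:(lra)).
  apply Rabs_def1; lra.
Qed.

Lemma Glim_RInt_gen s l : Glim s l ->
  RInt_gen (fun t => Rpower t (s - 1) * exp (- t)) (at_right 0) (Rbar_locally p_infty) = l.
Proof.
  intros HG. apply is_RInt_gen_unique.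
  unfold is_RInt_gen, filterlimi, filter_le, filtermapi.
  intros P [eps HP].
  destruct (HG eps (cond_pos eps)) as [a0 [b0 [Ha0 [Hab0 Hint]]]].
  apply Filter_prod with (fun a => 0 < a <= a0) (fun b => b0 <= b).
  - exists (mkposreal a0 Ha0). intros y Hy Hy0. split; auto.
    unfold ball in Hy; simpl in Hy; unfold AbsRing_ball, abs, minus, plus, opp in Hy; simpl in Hy.
    apply Rabs_def2 in Hy. lra.
  - exists b0. intros; lra.
  - intros a b Ha Hb. simpl. exists (RInt (gf s) a b). split.
    + apply (@RInt_correct R_CompleteNormedModule). apply ex_RInt_gf; lra.
    + apply HP. unfold ball; simpl; unfold AbsRing_ball, abs, minus, plus, opp; simpl.
      apply Hint; auto.
Qed.

Definition Hf (s x : R) : R := - (Rpower x s * exp (- x)).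

Lemma gf_succ_cont s t : 0 < t -> continuous (fun x => gf (s+1) x - s * gf s x) t.
Proof.
  intros Ht. apply (@ex_derive_continuous R_AbsRing R_NormedModule).
  unfold gf, Rpower. auto_derive. auto.
Qed.

Lemma RInt_gf_succ s a b : 0 < a -> a <= b ->
  RInt (gf (s+1)) a b = (Hf s b - Hf s a) + s * RInt (gf s) a b.
Proof.
  intros Ha Hab.
  assert (H1 : is_RInt (fun x => gf (s+1) x - s * gf s x) a b (minus (Hf s b) (Hf s a))).
  { apply (is_RInt_derive (Hf s)).
    - intros x Hx. rewrite Rmin_left in Hx by lra. apply h_der. lra.
    - intros x Hx. rewrite Rmin_left in Hx by lra. apply gf_succ_cont. lra. }
  assert (H2 : is_RInt (gf s) a b (RInt (gf s) a b)).
  { apply (@RInt_correct R_CompleteNormedModule). apply ex_RInt_gf; lra. }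
  apply (is_RInt_scal _ _ _ s) in H2.
  pose proof (is_RInt_plus _ _ _ _ _ _ H1 H2) as H3.
  apply is_RInt_unique.
  eapply is_RInt_ext; [|exact H3].
  intros x _. unfold plus, scal; simpl. unfold mult; simpl. ring.
Qed.

Lemma Hf_small_a s a : 1 < s -> 0 < a < 1 -> Rabs (Hf s a) <= a.
Proof.
  intros Hs Ha. unfold Hf, Rpower. rewrite Rabs_Ropp.
  rewrite Rabs_pos_eq by (apply Rlt_le, Rmult_lt_0_compat; apply exp_pos).
  assert (ln a < 0) by (rewrite <- ln_1; apply ln_increasing; lra).
  assert (exp (s * ln a) <= a).
  { rewrite <- (exp_ln a) at 2 by lra. apply exp_le_exp. nra. }
  assert (exp (- a) <= 1) by (rewrite <- exp_0; apply exp_le_exp; lra).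
  pose proof (exp_pos (s * ln a)). nra.
Qed.

Lemma Hf_gf s b : 0 < b -> Rabs (Hf s b) = gf (s+1) b.
Proof.
  intros Hb. unfold Hf. rewrite Rabs_Ropp, Rabs_pos_eq.
  - unfold gf. replace (s + 1 - 1) with s by ring. reflexivity.
  - apply Rlt_le, Rmult_lt_0_compat; [unfold Rpower|]; apply exp_pos.
Qed.

Lemma Glim_succ s l : 1 < s -> Glim s l -> Glim (s+1) (s*l).
Proof.
  intros Hs HG eps Heps.
  destruct (HG (eps / (3 * s)) ltac:(apply Rdiv_lt_0_compat; lra)) as [a0 [b0 [Ha0 [Hab0 Hint]]]].
  set (K := Ks (s+1)).
  assert (HK : 0 < K) by (unfold K, Ks; apply exp_pos).
  set (b1 := Rmax b0 (2 * Rabs (ln (eps / (3 * K))) + 1)).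
  set (a1 := Rmin a0 (Rmin (eps / 3) (1/2))).
  assert (Ha1 : 0 < a1).
  { unfold a1. repeat apply Rmin_pos; lra. }
  assert (a1 <= a0) by apply Rmin_l.
  assert (a1 <= eps / 3) by (unfold a1; eapply Rle_trans; [apply Rmin_r|apply Rmin_l]).
  assert (a1 <= 1/2) by (unfold a1; eapply Rle_trans; [apply Rmin_r|apply Rmin_r]).
  assert (b0 <= b1) by apply Rmax_l.
  assert (2 * Rabs (ln (eps / (3 * K))) + 1 <= b1) by apply Rmax_r.
  exists a1, b1. repeat split; try lra.
  intros a b Ha Hb.
  rewrite RInt_gf_succ by lra.
  assert (HA : Rabs (Hf s a) <= a) by (apply Hf_small_a; lra).
  assert (HBb : Rabs (Hf s b) < eps / 3).
  { rewrite Hf_gf by lra. eapply Rle_lt_trans. apply gf_bound; lra.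
    fold K.
    assert (exp (- b / 2) < eps / (3 * K)).
    { rewrite <- (exp_ln (eps / (3 * K))) by (apply Rdiv_lt_0_compat; lra).
      apply exp_increasing. pose proof (Rabs_pos (ln (eps / (3 * K)))).
      pose proof (Rle_abs (- ln (eps / (3 * K)))). rewrite Rabs_Ropp in H5. lra. }
    apply Rmult_lt_compat_l with (r := K) in H4; auto.
    replace (K * (eps / (3 * K))) with (eps / 3) in H4 by (field; lra). exact H4. }
  assert (HI : Rabs (RInt (gf s) a b - l) < eps / (3 * s)) by (apply Hint; lra).
  replace (Hf s b - Hf s a + s * RInt (gf s) a b - s * l)
    with (Hf s b + (- Hf s a) + s * (RInt (gf s) a b - l)) by ring.
  eapply Rle_lt_trans. apply Rabs_triang.
  eapply Rle_lt_trans. apply Rplus_le_compat_r. apply Rabs_triang.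
  rewrite Rabs_Ropp, Rabs_mult, (Rabs_pos_eq s) by lra.
  assert (s * Rabs (RInt (gf s) a b - l) < eps / 3).
  { apply Rmult_lt_compat_l with (r := s) in HI; [|lra].
    replace (s * (eps / (3 * s))) with (eps / 3) in HI by (field; lra). exact HI. }
  lra.
Qed.

Lemma Gamma_Glim s l : Glim s l -> Gamma s = l.
Proof. intros H. unfold Gamma. apply Glim_RInt_gen. exact H. Qed.

Lemma Gamma_pos s : 1 < s -> 0 < Gamma s.
Proof. intros Hs. destruct (Glim_exists s Hs) as [l [Hl HG]]. rewrite (Gamma_Glim _ _ HG). exact Hl. Qed.

Lemma Gamma_succ s : 1 < s -> Gamma (s + 1) = s * Gamma s.
Proof.
  intros Hs. destruct (Glim_exists s Hs) as [l [Hl HG]].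
  rewrite (Gamma_Glim _ _ HG). apply Gamma_Glim. apply Glim_succ; auto.
Qed.

Fixpoint poch (nu : R) (n : nat) : R :=
  match n with O => 1 | S m => poch nu m * (nu + 1 + INR m) end.

Lemma poch_S nu n : poch nu (S n) = poch nu n * (nu + 1 + INR n).
Proof. reflexivity. Qed.

Lemma poch_pos nu n : 0 < nu -> 0 < poch nu n.
Proof.
  intros Hnu. induction n; simpl. lra.
  apply Rmult_lt_0_compat; auto. pose proof (pos_INR n). lra.
Qed.

Lemma Gamma_shift nu n : 0 < nu -> Gamma (nu + 1 + INR n) = Gamma (nu + 1) * poch nu n.
Proof.
  intros Hnu. induction n.
  - simpl. rewrite Rplus_0_r. ring.
  - rewrite S_INR. replace (nu + 1 + (INR n + 1)) with ((nu + 1 + INR n) + 1) by ring.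
    rewrite Gamma_succ. rewrite IHn. simpl. ring.
    pose proof (pos_INR n). lra.
Qed.

Definition coef (j : nat) (nu : R) (k : nat) : R := / (INR (Factorial.fact k) * poch nu (k + j)).

Lemma coef_pos j nu k : 0 < nu -> 0 < coef j nu k.
Proof.
  intros Hnu. unfold coef. apply Rinv_0_lt_compat, Rmult_lt_0_compat.
  apply lt_0_INR, Factorial.lt_O_fact. apply poch_pos, Hnu.
Qed.

Lemma Bessel_repr nu j x : 0 < nu -> 0 < x ->
  BesselI (nu + INR j) x = Rpower (x/2) (nu + INR j) / Gamma (nu + 1) * PSeries (coef j nu) ((x/2)^2).
Proof.
  intros Hnu Hx. unfold BesselI, PSeries.
  unfold Rdiv at 2. rewrite <- Series_scal_l. apply Series_ext. intro k.
  replace (2 * INR k + (nu + INR j)) with ((nu + INR j) + INR (2 * k))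
    by (rewrite mult_INR; simpl; ring).
  rewrite Rpower_plus, Rpower_pow by lra.
  replace (INR k + (nu + INR j) + 1) with (nu + 1 + INR (k + j)) by (rewrite plus_INR; ring).
  rewrite Gamma_shift by exact Hnu.
  rewrite <- pow_mult.
  unfold coef.
  assert (0 < Gamma (nu + 1)) by (apply Gamma_pos; lra).
  assert (0 < poch nu (k + j)) by (apply poch_pos; lra).
  assert (0 < INR (Factorial.fact k)) by (apply lt_0_INR, Factorial.lt_O_fact).
  unfold Rdiv. set (P := Rpower _ _). set (T := _ ^ (2 * k)). field. lra.
Qed.

Lemma coef_radius j nu : 0 < nu -> CV_radius (coef j nu) = p_infty.
Proof.
  intros Hnu. apply CV_radius_infinite_DAlembert.
  - intro n. apply Rgt_not_eq, coef_pos, Hnu.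
  - apply is_lim_seq_le_le with (fun _ => 0) (fun n => / INR (S n)).
    + intro n. unfold coef.
      assert (0 < poch nu (n + j)) by (apply poch_pos; lra).
      assert (0 < INR (Factorial.fact n)) by (apply lt_0_INR, Factorial.lt_O_fact).
      assert (HS : 0 < INR (S n)) by (apply lt_0_INR; lia).
      assert (Hq : 0 < nu + 1 + INR (n + j)) by (pose proof (pos_INR (n+j)); lra).
      replace (/ (INR (Factorial.fact (S n)) * poch nu (S n + j)) / / (INR (Factorial.fact n) * poch nu (n + j)))
        with (/ (INR (S n) * (nu + 1 + INR (n + j)))).
      2: { simpl (S n + j)%nat. change (Factorial.fact (S n)) with (S n * Factorial.fact n)%nat.
           rewrite mult_INR. simpl poch. field. repeat split; lra. }
      rewrite Rabs_pos_eq by (apply Rlt_le, Rinv_0_lt_compat, Rmult_lt_0_compat; lra).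
      split. apply Rlt_le, Rinv_0_lt_compat, Rmult_lt_0_compat; lra.
      apply Rinv_le_contravar. lra.
      pose proof (pos_INR (n + j)). nra.
    + apply is_lim_seq_const.
    + apply (is_lim_seq_incr_1 (fun n => / INR n)).
      replace (Finite 0) with (Rbar_inv p_infty) by reflexivity.
      apply is_lim_seq_inv. apply is_lim_seq_INR. discriminate.
Qed.

Lemma PS_derive_coef j nu n : 0 < nu -> PS_derive (coef j nu) n = coef (S j) nu n.
Proof.
  intros Hnu. unfold PS_derive, coef.
  change (Factorial.fact (S n)) with (S n * Factorial.fact n)%nat.
  replace (S n + j)%nat with (n + S j)%nat by lia.
  rewrite mult_INR.
  assert (0 < poch nu (n + S j)) by (apply poch_pos; lra).
  assert (0 < INR (Factorial.fact n)) by (apply lt_0_INR, Factorial.lt_O_fact).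
  assert (0 < INR (S n)) by (apply lt_0_INR; lia).
  field. repeat split; lra.
Qed.

Lemma der_coef j nu y : 0 < nu ->
  is_derive (PSeries (coef j nu)) y (PSeries (coef (S j) nu) y).
Proof.
  intros Hnu.
  rewrite <- (PSeries_ext (PS_derive (coef j nu))) by (intro; apply PS_derive_coef, Hnu).
  apply is_derive_PSeries. rewrite coef_radius by exact Hnu. simpl. trivial.
Qed.

Lemma ex_ps j nu y : 0 < nu -> ex_pseries (coef j nu) y.
Proof.
  intros Hnu. apply ex_pseries_R. apply ex_series_Rabs. apply CV_disk_inside.
  rewrite coef_radius by exact Hnu. simpl. trivial.
Qed.

Lemma coef_rel nu y : 0 < nu ->
  y * PSeries (coef 2 nu) y = PSeries (coef 0 nu) y - (nu + 1) * PSeries (coef 1 nu) y.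
Proof.
  intros Hnu.
  rewrite <- PSeries_incr_1. rewrite <- PSeries_scal. rewrite <- PSeries_minus.
  2: apply ex_ps, Hnu.
  2: { apply ex_pseries_scal. unfold mult; simpl; ring. apply ex_ps, Hnu. }
  apply PSeries_ext. intro n. destruct n as [|m].
  - unfold PS_incr_1, PS_minus, PS_scal, coef. simpl.
    unfold plus, opp, scal, zero; simpl. unfold mult; simpl. field. lra.
  - unfold PS_incr_1, PS_minus, PS_scal, coef.
    unfold plus, opp, scal; simpl. unfold mult; simpl.
    replace (m + 2)%nat with (S (S m)) by lia.
    rewrite !Nat.add_0_r, !Nat.add_1_r. rewrite plus_INR, mult_INR.
    rewrite !poch_S, !S_INR.
    assert (0 < poch nu m) by (apply poch_pos; lra).
    assert (0 < INR (Factorial.fact m)) by (apply lt_0_INR, Factorial.lt_O_fact).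
    pose proof (pos_INR m).
    field. repeat split; try nra.
Qed.

Lemma ps_ge_first j nu y : 0 < nu -> 0 <= y -> coef j nu 0 <= PSeries (coef j nu) y.
Proof.
  intros Hnu Hy. unfold PSeries.
  rewrite Series_incr_1 by (apply ex_pseries_R, ex_ps, Hnu).
  rewrite pow_O, Rmult_1_r.
  assert (H0 : Series (fun _ : nat => 0) = 0).
  { transitivity (PSeries (fun _ => 0) 0).
    unfold PSeries; apply Series_ext; intro; ring. apply PSeries_const_0. }
  assert (0 <= Series (fun k => coef j nu (S k) * y ^ S k)).
  { rewrite <- H0. apply Series_le.
    - intro n. split. lra. apply Rmult_le_pos. apply Rlt_le, coef_pos, Hnu. apply pow_le, Hy.
    - apply (ex_series_incr_1 (fun k => coef j nu k * y ^ k)). apply ex_pseries_R, ex_ps, Hnu. }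
  lra.
Qed.

Definition A nu y := PSeries (coef 0 nu) y.
Definition B nu y := PSeries (coef 1 nu) y.
Definition C nu y := PSeries (coef 2 nu) y.
Definition Q nu y := A nu y * A nu y - A nu y * B nu y - y * (B nu y * B nu y).

Lemma A_ge1 nu y : 0 < nu -> 0 <= y -> 1 <= A nu y.
Proof.
  intros. unfold A. eapply Rle_trans; [|apply ps_ge_first; auto].
  unfold coef; simpl. lra.
Qed.

Lemma B_pos nu y : 0 < nu -> 0 <= y -> 0 < B nu y.
Proof.
  intros. unfold B. eapply Rlt_le_trans; [|apply ps_ge_first; auto].
  apply coef_pos; auto.
Qed.

Lemma Q0 nu : 0 < nu -> Q nu 0 = nu / (nu + 1).
Proof.
  intros Hnu. unfold Q, A, B. rewrite !PSeries_0. unfold coef. simpl. field. lra.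
Qed.

Definition Hq nu y := Rpower y (nu + 1/2) * Q nu y.
Definition DH nu y := Rpower y (nu - 1/2) *
  ((nu - 1/2) * (A nu y * A nu y + y * (B nu y * B nu y)) + A nu y * B nu y / 2).

Lemma Hq_der nu y : 0 < nu -> 0 < y -> is_derive (Hq nu) y (DH nu y).
Proof.
  intros Hnu Hy. unfold Hq, DH, Q, A, B, Rpower.
  auto_derive.
  - repeat split; auto; eexists; apply der_coef; auto.
  - replace (Derive (fun x => PSeries (coef 0 nu) x) y) with (PSeries (coef 1 nu) y)
      by (symmetry; apply is_derive_unique, der_coef; auto).
    replace (Derive (fun x => PSeries (coef 1 nu) x) y) with (PSeries (coef 2 nu) y)
      by (symmetry; apply is_derive_unique, der_coef; auto).
    assert (HC : PSeries (coef 2 nu) y = (PSeries (coef 0 nu) y - (nu + 1) * PSeries (coef 1 nu) y) / y).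
    { rewrite <- coef_rel by auto. field. lra. }
    rewrite HC.
    assert (HE : exp ((nu + 1 / 2) * ln y) = exp ((nu - 1 / 2) * ln y) * y).
    { replace ((nu + 1 / 2) * ln y) with ((nu - 1/2) * ln y + ln y) by field.
      rewrite exp_plus, exp_ln by exact Hy. reflexivity. }
    rewrite HE.
    set (a := PSeries (coef 0 nu) y). set (b := PSeries (coef 1 nu) y).
    set (e := exp ((nu - 1 / 2) * ln y)).
    field. lra.
Qed.

Lemma Q_ex_derive nu y : 0 < nu -> ex_derive (Q nu) y.
Proof.
  intros Hnu. unfold Q, A, B. auto_derive.
  repeat split; eexists; apply der_coef; auto.
Qed.

Lemma Q_pos nu y : 1/2 <= nu -> 0 < y -> 0 < Q nu y.
Proof.
  intros Hnu Hy.
  assert (Hnu0 : 0 < nu) by lra.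
  assert (HQ0 : 0 < Q nu 0).
  { rewrite Q0 by lra. apply Rdiv_lt_0_compat; lra. }
  assert (Hc : filterlim (Q nu) (locally 0) (locally (Q nu 0))).
  { apply continuity_pt_filterlim. apply continuity_pt_filterlim.
    apply (@ex_derive_continuous R_AbsRing R_NormedModule). apply Q_ex_derive; auto. }
  assert (Hl : locally 0 (fun z => 0 < Q nu z)).
  { apply Hc. exists (mkposreal _ HQ0). intros z Hz.
    unfold ball in Hz; simpl in Hz; unfold AbsRing_ball, abs, minus, plus, opp in Hz; simpl in Hz.
    apply Rabs_def2 in Hz. lra. }
  destruct Hl as [d Hd].
  set (y1 := Rmin (d/2) (y/2)).
  assert (Hy1 : 0 < y1) by (unfold y1; apply Rmin_pos; pose proof (cond_pos d); lra).
  assert (Hy1y : y1 < y) by (unfold y1; eapply Rle_lt_trans; [apply Rmin_r|lra]).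
  assert (HQ1 : 0 < Q nu y1).
  { apply Hd. unfold ball; simpl; unfold AbsRing_ball, abs, minus, plus, opp; simpl.
    rewrite Ropp_0, Rplus_0_r, Rabs_pos_eq by lra.
    unfold y1. eapply Rle_lt_trans; [apply Rmin_l|]. pose proof (cond_pos d). lra. }
  destruct (MVT_gen (Hq nu) y1 y (DH nu)) as [c [Hcr Heq]].
  - intros x Hx. rewrite Rmin_left, Rmax_right in Hx by lra. apply Hq_der; lra.
  - intros x Hx. rewrite Rmin_left, Rmax_right in Hx by lra.
    apply continuity_pt_filterlim.
    apply (@ex_derive_continuous R_AbsRing R_NormedModule).
    eexists. apply Hq_der; lra.
  - rewrite Rmin_left, Rmax_right in Hcr by lra.
    assert (HD : 0 < DH nu c).
    { unfold DH. apply Rmult_lt_0_compat. unfold Rpower; apply exp_pos.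
      pose proof (A_ge1 nu c Hnu0 ltac:(lra)). pose proof (B_pos nu c Hnu0 ltac:(lra)).
      assert (0 <= (nu - 1/2) * (A nu c * A nu c + c * (B nu c * B nu c))).
      { apply Rmult_le_pos. lra. apply Rplus_le_le_0_compat. nra.
        apply Rmult_le_pos. lra. nra. }
      assert (0 < A nu c * B nu c / 2) by (apply Rdiv_lt_0_compat; nra).
      lra. }
    assert (0 < Hq nu y1) by (unfold Hq; apply Rmult_lt_0_compat; auto; unfold Rpower; apply exp_pos).
    assert (0 < Hq nu y).
    { assert (0 < DH nu c * (y - y1)) by (apply Rmult_lt_0_compat; lra). lra. }
    unfold Hq in H0.
    assert (0 < Rpower y (nu + 1/2)) by (unfold Rpower; apply exp_pos).
    destruct (Rlt_or_le 0 (Q nu y)) as [Hp|Hp]; auto.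
    exfalso. assert (Rpower y (nu + 1/2) * Q nu y <= 0) by nra. lra.
Qed.

Lemma Bessel_012 nu x : 0 < nu -> 0 < x ->
  BesselI nu x = Rpower (x/2) nu / Gamma (nu + 1) * A nu ((x/2)^2) /\
  BesselI (nu + 1) x = Rpower (x/2) nu * (x/2) / Gamma (nu + 1) * B nu ((x/2)^2) /\
  BesselI (nu + 2) x = Rpower (x/2) nu * (x/2)^2 / Gamma (nu + 1) * C nu ((x/2)^2).
Proof.
  intros Hnu Hx.
  pose proof (Bessel_repr nu 0 x Hnu Hx) as R0.
  pose proof (Bessel_repr nu 1 x Hnu Hx) as R1.
  pose proof (Bessel_repr nu 2 x Hnu Hx) as R2.
  replace (INR 0) with 0 in R0 by reflexivity.
  replace (INR 1) with 1 in R1 by reflexivity.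
  replace (INR 2) with 2 in R2 by (simpl; ring).
  rewrite Rplus_0_r in R0.
  rewrite Rpower_plus, Rpower_1 in R1 by lra.
  assert (E : Rpower (x/2) (nu + 2) = Rpower (x/2) nu * (x/2)^2).
  { rewrite Rpower_plus. f_equal. rewrite <- (Rpower_pow 2 (x/2)) by lra.
    replace (INR 2) with 2 by (simpl; ring). reflexivity. }
  rewrite E in R2.
  unfold A, B, C. repeat split; assumption.
Qed.

Theorem mainTheorem5 (nu : R) (hnu : 1 / 2 <= nu) :
  (forall x : R, 0 < x ->
     BesselI (nu + 1) x ^ 2 - BesselI nu x * BesselI (nu + 2) x
     < 2 * nu / x * BesselI nu x * BesselI (nu + 1) x)
  /\
  (forall K r : R, nu + 1 < K -> 0 < r -> r = Psi nu (2 * K * r) ->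
     r < sqrt (1 - 1 / K)).
Proof.
  assert (Hnu : 0 < nu) by lra.
  assert (Hg : 0 < Gamma (nu + 1)) by (apply Gamma_pos; lra).
  split.
  - intros x Hx.
    destruct (Bessel_012 nu x Hnu Hx) as [E0 [E1 E2]].
    rewrite E0, E1, E2.
    set (t := x / 2). assert (Ht : 0 < t) by (unfold t; lra).
    replace x with (2 * t) by (unfold t; field).
    set (y := t ^ 2).
    assert (Hy : 0 < y) by (unfold y; apply pow_lt, Ht).
    assert (HQ := Q_pos nu y hnu Hy). unfold Q in HQ.
    assert (HC : C nu y = (A nu y - (nu + 1) * B nu y) / y).
    { unfold C, A, B. rewrite <- coef_rel by auto. field. lra. }
    rewrite HC.
    assert (HP : 0 < Rpower t nu) by (unfold Rpower; apply exp_pos).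
    set (P := Rpower t nu) in *. set (g := Gamma (nu + 1)) in *.
    set (a := A nu y) in *. set (b := B nu y) in *.
    unfold y in *.
    apply Rminus_gt_0_lt.
    match goal with |- 0 < ?e => replace e with ((P / g) ^ 2 * (a * a - a * b - t ^ 2 * (b * b))) end.
    + apply Rmult_lt_0_compat; auto. apply pow_lt, Rdiv_lt_0_compat; auto.
    + field. lra.
  - intros K r HK Hr Hpsi.
    assert (HK0 : 0 < K) by lra.
    assert (Hx : 0 < 2 * K * r) by nra.
    unfold Psi in Hpsi.
    destruct (Bessel_012 nu (2 * K * r) Hnu Hx) as [E0 [E1 _]].
    rewrite E0, E1 in Hpsi.
    replace (2 * K * r / 2) with (K * r) in Hpsi by field.
    set (y := (K * r) ^ 2) in *.
    assert (Hy : 0 < y) by (unfold y; apply pow_lt; nra).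
    assert (HQ := Q_pos nu y hnu Hy). unfold Q in HQ.
    assert (Ha := A_ge1 nu y Hnu ltac:(lra)).
    assert (Hb := B_pos nu y Hnu ltac:(lra)).
    assert (HP : 0 < Rpower (K * r) nu) by (unfold Rpower; apply exp_pos).
    set (P := Rpower (K * r) nu) in *. set (g := Gamma (nu + 1)) in *.
    set (a := A nu y) in *. set (b := B nu y) in *.
    assert (Hab : a = K * b).
    { assert (r * a = K * r * b).
      { rewrite Hpsi at 1. field. repeat split; lra. }
      apply Rmult_eq_reg_l with r; [|lra]. rewrite H. ring. }
    rewrite Hab in HQ. unfold y in HQ.
    assert (Hr2 : K * K - K - K * K * (r * r) > 0).
    { assert (b * b * (K * K - K - K * K * (r * r)) > 0) by (simpl in HQ; nra).
      assert (0 < b * b) by nra. nra. }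
    assert (Hlt : r ^ 2 < 1 - 1 / K).
    { apply Rmult_lt_reg_l with (K * K). nra.
      replace (K * K * (1 - 1 / K)) with (K * K - K) by (field; lra). simpl. nra. }
    rewrite <- (sqrt_pow2 r) by lra.
    apply sqrt_lt_1_alt. split; [apply pow2_ge_0|exact Hlt].
Qed.
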